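(* Consider a Time-and-Level-of-Use (TLOU) tariff for a single time frame $t$, given by a booking fee $K>0$, a step-wise non-increasing lower price function $\pi^L:[0,\infty)\to\mathbb{R}$ with finite set of breakpoints $C^L$, and a step-wise non-decreasing higher price function $\pi^H:[0,\infty)\to\mathbb{R}$ with finite set of breakpoints $C^H$, where $\pi^L(0)=\pi^H(0)=\pi_0(t)$. Let the user's consumption be a discrete random variable with finite support given by scenarios $\omega\in\Omega_t$, with consumption levels $x_\omega\ge 0$ and probabilities $p_\omega>0$. For a booked capacity $c\ge 0$ let $$\mathcal{C}(c)=K\cdot c+\sum_{\omega\in\Omega_t} x_\omega\, p_\omega\left(\pi^L(c)\,\mathbb{1}[x_\omega\le c]+\pi^H(c)\,\mathbb{1}[x_\omega>c]\right)$$ be the user's expected cost. Then any capacity $c^\ast\ge 0$ minimizing $\mathcal{C}$ over $c\ge 0$ (an optimal booked capacity for the user at time frame $t$) belongs to the finite set $$S_t=\{0\}\cup C^L\cup\{x_\omega:\omega\in\Omega_t\}.$$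
   Context: Under TLOU, a user books a capacity $c\ge0$ for a time frame $t$; if the realized consumption $x$ satisfies $x\le c$ the total cost is $K c+\pi^L(c)x$, and otherwise it is $Kc+\pi^H(c)x$. The price functions are step functions: for breakpoints $c_1<c_2<\dots<c_m$ in $C^L$ (all positive), $\pi^L$ is constant on $[0,c_1)$ (equal to $\pi_0(t)$, the Time-of-Use price of the time frame) and on each interval $[c_j,c_{j+1})$ and $[c_m,\infty)$, with its values non-increasing from one step to the next; $\pi^H$ is defined analogously with breakpoints $C^H$ and values non-decreasing from one step to the next. The notation $\mathbb{1}[\cdot]$ denotes the indicator of the condition. *)

(* Defs.v *)
From HB Require Import structures.
From mathcomp Require Import all_boot all_order all_algebra.
Set Implicit Arguments. Unset Strict Implicit. Unset Printing Implicit Defensive.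
Import Order.TTheory GRing.Theory Num.Theory.
Local Open Scope ring_scope.

(* A step function on [0,oo) given by strictly increasing breakpoints
   C = [:: c_1; ...; c_m] and values v = [:: v_0; v_1; ...; v_m]:
   it equals v_0 on [0, c_1), v_j on [c_j, c_{j+1}) and v_m on [c_m, oo).
   The index of the step containing c is the number of breakpoints <= c. *)
Definition stepfun (R : realFieldType) (C v : seq R) (c : R) : R :=
  nth 0 v (count (fun b => b <= c) C).

Definition breakpoints_ok (R : realFieldType) (C v : seq R) : Prop :=
  [/\ sorted <%R C, all (fun b => 0 < b) C & size v = (size C).+1].

Definition ind (R : realFieldType) (b : bool) : R := (b : nat)%:R.

Definition tlou_cost (R : realFieldType) (Omega : finType) (K : R)
    (CL vL CH vH : seq R) (x p : Omega -> R) (c : R) : R :=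
  K * c + \sum_(w : Omega) x w * p w *
      (stepfun CL vL c * ind R (x w <= c) + stepfun CH vH c * ind R (c < x w)).

Definition candidates (R : realFieldType) (Omega : finType) (CL : seq R)
    (x : Omega -> R) : seq R :=
  0 :: CL ++ [seq x w | w <- enum Omega].

(* Main.v *)
Require Import Defs.
From HB Require Import structures.
From mathcomp Require Import all_boot all_order all_algebra.
Import Order.TTheory GRing.Theory Num.Theory.
Local Open Scope ring_scope.

Lemma below_pt (R : realFieldType) (s : seq R) (cs : R) : 0 < cs ->
  exists c, [/\ 0 <= c, c < cs &
     forall b, b \in s -> b != cs -> (b <= c) = (b <= cs)].
Proof.
move=> cs0; elim: s => [|a s [c [c0 ccs Hc]]].
  by exists 0; split => // b; rewrite in_nil.
have [acs|csa] := ltP a cs.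
  have [ca|ac] := ltP c a.
    exists a; split => //; first by apply: le_trans (ltW ca).
    move=> b; rewrite in_cons => /orP [/eqP ->|bs] bn; first by rewrite lexx (ltW acs).
    have [bc|cb] := leP b c.
      by rewrite (le_trans bc (ltW ca)) (le_trans bc (ltW ccs)).
    have h := Hc b bs bn; rewrite leNgt cb /= in h.
    have csb : cs < b by rewrite ltNge -h.
    by rewrite -h leNgt (lt_trans acs csb).
  exists c; split => // b; rewrite in_cons => /orP [/eqP ->|bs] bn.
    by rewrite ac (ltW acs).
  exact: Hc.
exists c; split => // b; rewrite in_cons => /orP [/eqP ->|bs] bn.
  have csa' : cs < a by rewrite lt_def bn csa.
  by rewrite !leNgt csa' (le_lt_trans (ltW ccs) csa').
exact: Hc.
Qed.

Theorem proposition1 (R : realFieldType) (Omega : finType)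
    (K pi0 : R) (CL vL CH vH : seq R) (x p : Omega -> R) (cstar : R) :
  0 < K ->
  breakpoints_ok CL vL -> sorted >=%R vL ->
  breakpoints_ok CH vH -> sorted <=%R vH ->
  nth 0 vL 0 = pi0 -> nth 0 vH 0 = pi0 ->
  (forall w, 0 <= x w) -> (forall w, 0 < p w) ->
  0 <= cstar ->
  (forall c, 0 <= c -> tlou_cost K CL vL CH vH x p cstar <= tlou_cost K CL vL CH vH x p c) ->
  cstar \in candidates CL x.
Proof.
move=> K0 _ _ [_ _ szH] sH _ _ x0 p0 cs0 Hopt.
apply/negPn/negP; rewrite /candidates in_cons negb_or mem_cat negb_or => /andP [cn0 /andP [nCL nX]].
have cpos : 0 < cstar by rewrite lt_def cn0.
have [c [c0 ccs Hc]] := @below_pt R (CL ++ [seq x w | w <- enum Omega]) cstar cpos.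
have HL : {in CL, forall b, (b <= c) = (b <= cstar)}.
  move=> b bC; apply: Hc; first by rewrite mem_cat bC.
  by apply: contraNneq nCL => <-.
have HX : forall w, (x w <= c) = (x w <= cstar).
  move=> w; apply: Hc; first by rewrite mem_cat map_f ?mem_enum ?orbT.
  by apply: contraNneq nX => <-; rewrite map_f ?mem_enum.
have HX' : forall w, (c < x w) = (cstar < x w) by move=> w; rewrite !ltNge HX.
have eL : stepfun CL vL c = stepfun CL vL cstar.
  by rewrite /stepfun (eq_in_count HL).
have eH : stepfun CH vH c <= stepfun CH vH cstar.
  rewrite /stepfun; apply: (sorted_leq_nth le_trans lexx) => //.
  - by rewrite inE szH ltnS count_size.
  - by rewrite inE szH ltnS count_size.
  by apply: sub_count => b /= bc; apply: le_trans bc (ltW ccs).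
have := Hopt c c0; apply/negP; rewrite -ltNge /tlou_cost.
apply: ltr_leD; first by rewrite ltr_pM2l.
apply: ler_sum => w _; rewrite eL HX HX'.
apply: ler_wpM2l; first by rewrite mulr_ge0 // ltW.
rewrite lerD2l; apply: ler_wpM2r => //; rewrite /ind ler0n //.
Qed.
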